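(* Let $\alpha,\beta>0$, $\tau>0$, and let $\{S_{\alpha,\beta}^n\}_{n\in\mathbb{N}_0}\subset\mathcal{B}(X)$ be a discrete $(\alpha,\beta)$-resolvent family generated by a closed linear operator $A$ on a Banach space $X$ (so that $\tau^{-\alpha}\in\rho(A)$). Let $R_\tau:=\tau^{-\alpha}(\tau^{-\alpha}-A)^{-1}$. Then for every $x\in X$, $$S_{\alpha,\beta}^0x=a_{0,1}R_\tau x,\qquad S_{\alpha,\beta}^1x=a_{1,1}R_\tau x+a_{1,2}R_\tau^2 x,$$ and for every $n\geq 2$, $$S_{\alpha,\beta}^nx=\sum_{j=1}^{n+1}a_{n,j}R_\tau^j x,$$ where the scalars $a_{n,l}$ are defined as follows (writing $k(\cdot)$ for $k^\alpha_\tau(\cdot)$): $a_{0,1}:=k_\tau^\beta(0)$, $a_{1,1}:=\big(k_\tau^\beta(1)k(0)-k_\tau^\beta(0)k(1)\big)k(0)^{-1}$, $a_{1,2}:=k_\tau^\beta(0)k(1)k(0)^{-1}$, and for $n\geq 2$: $a_{n,n+1}:=k(1)a_{n-1,n}k(0)^{-1}$; $a_{n,1}:=\Big(k_\tau^\beta(n)k(0)-\sum_{j=0}^{n-1}k(n-j)a_{j,1}\Big)k(0)^{-1}$; $a_{n,l}:=\Big(\sum_{j=l-2}^{n-1}k(n-j)a_{j,l-1}-\sum_{j=l-1}^{n-1}k(n-j)a_{j,l}\Big)k(0)^{-1}$ for $2\leq l\leq n$.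
   Context: Fix a step size $\tau>0$. For $\gamma>0$ and $n\in\mathbb{N}_0$ let $k_\tau^\gamma(n):=\frac{\tau^{\gamma-1}\Gamma(\gamma+n)}{\Gamma(\gamma)\Gamma(n+1)}$ (so $k^\alpha_\tau(0)=\tau^{\alpha-1}\neq 0$). For $\alpha,\beta>0$, a sequence $\{S_{\alpha,\beta}^n\}_{n\in\mathbb{N}_0}\subset\mathcal{B}(X)$ is called a discrete $(\alpha,\beta)$-resolvent family generated by the closed operator $A:D(A)\subset X\to X$ if (1) $S^n_{\alpha,\beta}x\in D(A)$ for all $x\in X$, $n\in\mathbb N_0$, and $AS_{\alpha,\beta}^nx=S_{\alpha,\beta}^nAx$ for all $x\in D(A)$, $n\in\mathbb{N}_0$; (2) for every $x\in X$ and $n\in\mathbb{N}_0$, $S_{\alpha,\beta}^nx=k^\beta_\tau(n)x+\tau A\sum_{j=0}^n k^\alpha_\tau(n-j)S_{\alpha,\beta}^jx$. *)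

(* Defs.v *)
From HB Require Import structures.
From mathcomp Require Import all_boot all_order all_algebra.
From mathcomp Require Import all_classical all_reals all_analysis.
Set Implicit Arguments. Unset Strict Implicit. Unset Printing Implicit Defensive.
Import Order.TTheory GRing.Theory Num.Theory.
Import numFieldNormedType.Exports.
Local Open Scope classical_set_scope.
Local Open Scope ring_scope.

(* The kernel k_tau^gamma(n) = tau^(gamma-1) Gamma(gamma+n) / (Gamma(gamma) n!).
   Gamma is not in the library; we use the identity
   Gamma(gamma+n)/Gamma(gamma) = prod_{i<n} (gamma+i) (Pochhammer symbol). *)
Definition kfun (R : realType) (tau gamma : R) (n : nat) : R :=
  tau `^ (gamma - 1) * (\prod_(i < n) (gamma + i%:R)) / (n`!)%:R.

Section Ops.
Variables (K : numFieldType) (X : normedModType K).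

Definition linear_operator (D : set X) (A : X -> X) : Prop :=
  D 0 /\
  (forall (c : K) (x y : X), D x -> D y -> D (c *: x + y)) /\
  (forall (c : K) (x y : X), D x -> D y -> A (c *: x + y) = c *: A x + A y).

Definition closed_operator (D : set X) (A : X -> X) : Prop :=
  linear_operator D A /\ closed [set p : X * X | D p.1 /\ p.2 = A p.1].

Definition bounded_operator (T : X -> X) : Prop :=
  linear T /\ continuous T.

Definition is_resolvent (D : set X) (A : X -> X) (lam : K) (Rl : X -> X) : Prop :=
  bounded_operator Rl /\
  (forall x, D (Rl x) /\ lam *: Rl x - A (Rl x) = x) /\
  (forall y, D y -> Rl (lam *: y - A y) = y).
End Ops.

Definition discrete_resolvent_family (R : realType) (K : numFieldType)
    (iota : {rmorphism R -> K}) (X : normedModType K)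
    (alpha beta tau : R) (D : set X) (A : X -> X) (S : nat -> X -> X) : Prop :=
  (forall n, bounded_operator (S n)) /\
  (forall n x, D (S n x)) /\
  (forall n x, D x -> A (S n x) = S n (A x)) /\
  (forall n x, S n x = iota (kfun tau beta n) *: x
      + iota tau *: A (\sum_(0 <= j < n.+1) iota (kfun tau alpha (n - j)) *: S j x)).

(* The coefficients a_{n,l}; k = k_tau^alpha, kb = k_tau^beta.
   [arow k kb prev n l] computes a_{n,l} from the earlier rows [prev j l], j < n. *)
Definition arow (R : realType) (k kb : nat -> R) (prev : nat -> nat -> R)
    (n l : nat) : R :=
  if n == 0%N then (if l == 1%N then kb 0%N else 0)
  else if n == 1%N then
    (if l == 1%N then (kb 1%N * k 0%N - kb 0%N * k 1%N) / k 0%N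
     else if l == 2%N then kb 0%N * k 1%N / k 0%N else 0)
  else if l == n.+1 then k 1%N * prev n.-1 n / k 0%N
  else if l == 1%N then
    (kb n * k 0%N - \sum_(0 <= j < n) k (n - j)%N * prev j 1%N) / k 0%N
  else if (2 <= l <= n)%N then
    (\sum_(l - 2 <= j < n) k (n - j)%N * prev j l.-1
     - \sum_(l - 1 <= j < n) k (n - j)%N * prev j l) / k 0%N
  else 0.

Fixpoint atab (R : realType) (k kb : nat -> R) (n : nat) : nat -> nat -> R :=
  match n with
  | 0 => fun _ l => arow k kb (fun _ _ => 0) 0 l
  | m.+1 => let p := atab k kb m in
            fun j l => if (j <= m)%N then p j l else arow k kb p m.+1 l
  end.

Definition acoef (R : realType) (alpha beta tau : R) (n l : nat) : R :=
  atab (kfun tau alpha) (kfun tau beta) n n l.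

(* Main.v *)
Require Import Defs.
From HB Require Import structures.
From mathcomp Require Import all_boot all_order all_algebra.
From mathcomp Require Import all_classical all_reals all_analysis.
From mathcomp Require Import ring lra zify.
Import Order.TTheory GRing.Theory Num.Theory.
Import numFieldNormedType.Exports.
Local Open Scope classical_set_scope.
Local Open Scope ring_scope.

Section Coef.
Variables (R : realType) (k kb : nat -> R).
Hypothesis k0 : k 0%N != 0.

Definition aa n l := atab k kb n n l.

Lemma atab_stable m j l : (j <= m)%N -> atab k kb m j l = atab k kb j j l.
Proof.
elim: m => [|m IH] hj; first by rewrite leqn0 in hj; rewrite (eqP hj).
rewrite /=; case: ifP => hjm; first exact: IH.
have -> : j = m.+1 by apply/eqP; rewrite eqn_leq hj ltnNge hjm.
by rewrite /= ltnn.
Qed.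

Lemma arow_ext p q n l : (forall j l, (j < n)%N -> p j l = q j l) ->
  arow k kb p n l = arow k kb q n l.
Proof.
move=> H; rewrite /arow.
case: n H => [|[|n]] H //.
rewrite H //.
have E : forall l', \sum_(0 <= j < n.+2) k (n.+2 - j)%N * p j l' =
                    \sum_(0 <= j < n.+2) k (n.+2 - j)%N * q j l'.
  by move=> l'; apply: eq_big_nat => j /andP[_ hj]; rewrite H.
have E2 : forall m l', \sum_(m <= j < n.+2) k (n.+2 - j)%N * p j l' =
                    \sum_(m <= j < n.+2) k (n.+2 - j)%N * q j l'.
  by move=> m l'; apply: eq_big_nat => j /andP[_ hj]; rewrite H.
by rewrite E !E2.
Qed.

Lemma aa_fix n l : aa n l = arow k kb aa n l.
Proof.
case: n => [|m]; first by [].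
rewrite /aa /= ltnn; apply: arow_ext => j l' hj.
by rewrite atab_stable // -ltnS.
Qed.

Lemma aa0 n : aa n 0 = 0.
Proof. by rewrite aa_fix /arow; case: n => [|[|n]]. Qed.

Lemma aa_big n l : (n.+1 < l)%N -> aa n l = 0.
Proof.
move=> h; rewrite aa_fix /arow; case: n h => [|[|n]] h.
- by case: l h => [|[|l]].
- by case: l h => [|[|[|l]]].
- have -> : (l == n.+3) = false by apply/negbTE; rewrite neq_ltn h orbT.
  case: l h => [|[|l]] h //.
  rewrite ifF //; apply/negbTE; rewrite negb_and -ltnNge; apply/orP; right; rewrite -leqNgt -ltnS ltnW //.
Qed.

Lemma sum_drop (F : nat -> R) m n : (m <= n)%N -> (forall j, (j < m)%N -> F j = 0) ->
  \sum_(0 <= j < n) F j = \sum_(m <= j < n) F j.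
Proof.
move=> hmn H; rewrite (big_cat_nat (leq0n m) hmn) /= big1_seq ?add0r //.
by move=> j /andP[_]; rewrite mem_index_iota => /andP[_ hj]; apply: H.
Qed.

Lemma aa_rec n l : aa n l = (l == 1%N)%:R * kb n +
  (\sum_(0 <= j < n) k (n - j)%N * (aa j l.-1 - aa j l)) / k 0%N.
Proof.
case: n => [|[|n]].
- by rewrite big_geq // mul0r addr0 /aa /= /arow /=; case: (l == 1%N); rewrite ?mul1r ?mul0r.
- rewrite big_nat1 subn0.
  have a0 : forall l', aa 0 l' = if l' == 1%N then kb 0 else 0 by [].
  rewrite aa_fix /arow /= !a0.
  case: l => [|[|[|l]]] /=.
  + by rewrite subrr mulr0 mul0r mul0r addr0.
  + by rewrite mul1r; field.
  + by field.
  + by rewrite subrr mulr0 mul0r mul0r addr0.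
- set n2 := n.+2.
  rewrite aa_fix /arow -/n2 /=.
  case: ifP => [/eqP hl|hl1].
  + rewrite hl /= mul0r add0r.
    rewrite /n2 big_nat_recr //= big1_seq ?add0r.
      by rewrite subSS subSnn (@aa_big n.+1 n.+3) // subr0.
    move=> j /andP[_]; rewrite mem_index_iota => /andP[_ hj].
    rewrite (@aa_big j n.+2) ?(@aa_big j n.+3) ?subrr ?mulr0 //;
      by rewrite ltnS // (ltn_trans hj).
  case: ifP => [/eqP hl|hl2].
  + rewrite hl mul1r /=.
    under [X in _ = _ + X / _]eq_bigr do rewrite aa0 sub0r mulrN.
    by rewrite sumrN; field.
  case: ifP => [/andP[h2 hn]|hn].
  + rewrite mul0r add0r.
    under [X in _ = X / _]eq_bigr do rewrite mulrBr.
    rewrite sumrB.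
    have L2 : (l - 2 <= n2)%N by exact: (leq_trans (leq_subr 2 l) hn).
    have L1 : (l - 1 <= n2)%N by exact: (leq_trans (leq_subr 1 l) hn).
    have F2 : forall j, (j < l - 2)%N -> k (n2 - j)%N * aa j l.-1 = 0.
      move=> j hj; rewrite aa_big ?mulr0 //.
      case: l hl1 hl2 h2 hn hj {L1 L2} => [|[|l]] //= _ _ _ _; lia.
    have F1 : forall j, (j < l - 1)%N -> k (n2 - j)%N * aa j l = 0.
      move=> j hj; rewrite aa_big ?mulr0 //.
      case: l hl1 hl2 h2 hn hj {L1 L2 F2} => [|l] //= _ _ _ _; lia.
    by rewrite (@sum_drop _ (l - 2) _ L2 F2) (@sum_drop _ (l - 1) _ L1 F1).
  + rewrite mul0r add0r big1_seq ?mul0r //.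
    move=> j /andP[_]; rewrite mem_index_iota => /andP[_ hj].
    case: l hl1 hl2 hn => [|l] hl1 hl2 hn.
      by rewrite /= aa0 subrr mulr0.
    have hlt : (n2 < l)%N by move: hl1 hn; rewrite /n2; lia.
    rewrite /= !aa_big ?subrr ?mulr0 //; lia.
Qed.
End Coef.
Arguments aa {R}.
Arguments aa_rec {R k kb}.
Arguments aa0 {R k kb}.
Arguments aa_big {R k kb}.
Section Op.
Variables (K : numFieldType) (X : normedModType K).
Implicit Types (f : X -> X).

Lemma lin0 f : linear f -> f 0 = 0.
Proof.
move=> hf; have h := hf 1 0 0; rewrite !scale1r addr0 in h.
by apply: (@addrI _ (f 0)); rewrite addr0 -h.
Qed.

Lemma linZ f a u : linear f -> f (a *: u) = a *: f u.
Proof. by move=> hf; have := hf a u 0; rewrite !addr0 (lin0 _ hf) addr0. Qed.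

Lemma linD f u v : linear f -> f (u + v) = f u + f v.
Proof. by move=> hf; have := hf 1 u v; rewrite !scale1r. Qed.

Lemma linB f u v : linear f -> f (u - v) = f u - f v.
Proof. by move=> hf; have := hf (-1) v u; rewrite !scaleN1r [- v + u]addrC [- f v + _]addrC. Qed.

Lemma lin_sum f (I : Type) (r : seq I) (P : pred I) (c : I -> K) (v : I -> X) :
  linear f -> f (\sum_(i <- r | P i) c i *: v i) = \sum_(i <- r | P i) c i *: f (v i).
Proof.
move=> hf; apply: (big_rec2 (fun a b => f a = b)); first exact: lin0.
by move=> i y1 y2 _ <-; exact: hf.
Qed.

Lemma A_sum (D : set X) (A : X -> X) (I : Type) (r : seq I) (P : pred I)
  (c : I -> K) (v : I -> X) : linear_operator D A -> (forall i, D (v i)) ->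
  D (\sum_(i <- r | P i) c i *: v i) /\
  A (\sum_(i <- r | P i) c i *: v i) = \sum_(i <- r | P i) c i *: A (v i).
Proof.
move=> [D0 [DC AL]] hv.
apply: (big_rec2 (fun a b => D a /\ A a = b)).
  split=> //; have h := AL 1 0 0 D0 D0; rewrite !scale1r addr0 in h.
  by apply: (@addrI _ (A 0)); rewrite addr0 -h.
by move=> i y1 y2 _ [Dy <-]; split; [exact: DC | exact: AL].
Qed.

Lemma A_Z (D : set X) (A : X -> X) a y : linear_operator D A -> D y ->
  A (a *: y) = a *: A y.
Proof.
move=> hA Dy; have := @A_sum D A unit [:: tt] xpredT (fun _ => a) (fun _ => y) hA (fun _ => Dy).
by rewrite !big_seq1 => -[_].
Qed.

Lemma shift_sum (c : nat -> K) (g : nat -> X) M : c 0%N = 0 -> c M.-1 = 0 -> (0 < M)%N ->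
  \sum_(0 <= l < M) c l *: g l.+1 = \sum_(0 <= l < M) c l.-1 *: g l.
Proof.
case: M => [|M] //= c0 cM _.
by rewrite big_nat_recr //= big_nat_recl //= cM c0 !scale0r addr0 add0r.
Qed.
End Op.
Arguments A_Z {K X D A} a y.
Arguments A_sum {K X D A I} r P c v.
Arguments lin_sum {K X} f {I} r P c v.
Arguments lin0 {K X f}.
Arguments linZ {K X f} a u.
Arguments linD {K X f} u v.
Arguments linB {K X f} u v.
Arguments shift_sum {K X} c g M.
Theorem theorem3p11 (R : realType) (K : numFieldType) (iota : {rmorphism R -> K})
    (X : completeNormedModType K) (alpha beta tau : R)
    (D : set X) (A : X -> X) (S : nat -> X -> X) :
  0 < alpha -> 0 < beta -> 0 < tau ->
  closed_operator D A ->
  discrete_resolvent_family iota alpha beta tau D A S ->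
  exists Rl : X -> X,
    is_resolvent D A (iota (tau `^ (- alpha))) Rl /\
    let Rt := fun x => iota (tau `^ (- alpha)) *: Rl x in
    (forall x, S 0%N x = iota (acoef alpha beta tau 0 1) *: Rt x) /\
    (forall x, S 1%N x = iota (acoef alpha beta tau 1 1) *: Rt x
                        + iota (acoef alpha beta tau 1 2) *: Rt (Rt x)) /\
    (forall (n : nat), (2 <= n)%N -> forall x,
        S n x = \sum_(1 <= j < n.+2) iota (acoef alpha beta tau n j) *: iter j Rt x).
Proof.
move=> Ha Hb Ht [hA _] [hSb [hSD [hSA hS]]].
set k := kfun tau alpha; set kb := kfun tau beta.
set mu := tau `^ alpha.
have k0E : k 0%N = tau `^ (alpha - 1) by rewrite /k /kfun big_ord0 mulr1 fact0 divr1.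
have kb0E : kb 0%N = tau `^ (beta - 1) by rewrite /kb /kfun big_ord0 mulr1 fact0 divr1.
have hk0 : k 0%N != 0 by rewrite k0E gt_eqF // powR_gt0.
have hkb0 : kb 0%N != 0 by rewrite kb0E gt_eqF // powR_gt0.
have htk : tau * k 0%N = mu.
  rewrite k0E -{1}(powRr1 (ltW Ht)) -powRD; first by rewrite addrC subrK.
  by rewrite (gt_eqF Ht) implybT.
have hmu : mu != 0 by rewrite gt_eqF // powR_gt0.
have ht0 : tau != 0 by rewrite gt_eqF.
have lamE : tau `^ (- alpha) = mu^-1 by rewrite powRN.
have hS0lin : linear (S 0%N) by case: (hSb 0%N).
have eqn : forall n x, S n x - iota mu *: A (S n x) =
    iota (kb n) *: x + iota tau *: \sum_(0 <= j < n) iota (k (n - j)%N) *: A (S j x).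
  move=> n x; have E := hS n x.
  rewrite {1}E.
  rewrite (A_sum (index_iota 0 n.+1) xpredT (fun j => iota (k (n - j)%N))
     (fun j => S j x) hA (fun j => hSD j x)).2.
  rewrite big_nat_recr //= subnn scalerDr scalerA -rmorphM htk.
  by rewrite -/k addrA addrK.
have eq0 : forall x, S 0%N x - iota mu *: A (S 0%N x) = iota (kb 0%N) *: x.
  by move=> x; rewrite eqn big_geq // scaler0 addr0.
pose Rl := fun x => iota (mu / kb 0%N) *: S 0%N x.
have hRlin : linear Rl.
  move=> a u v; rewrite /Rl hS0lin scalerDr !scalerA; congr (_ + _).
  by rewrite mulrC.
exists Rl.
have SA0 : forall y, D y -> S 0%N (A y) = A (S 0%N y) by move=> y Dy; rewrite hSA.
have iotamu : iota mu != 0 by rewrite fmorph_eq0.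
have A0 : forall x, A (S 0%N x) = (iota mu)^-1 *: (S 0%N x - iota (kb 0%N) *: x).
  by move=> x; rewrite -(eq0 x) opprB addrC subrK scalerA mulVf // scale1r.
have RlE : forall x, Rl x = iota (mu / kb 0%N) *: S 0%N x by [].
have e1 : iota mu^-1 * iota (mu / kb 0%N) = iota (kb 0%N)^-1.
  rewrite -rmorphM; congr (iota _); by field; rewrite hkb0 hmu.
have e2 : iota (mu / kb 0%N) / iota mu = iota (kb 0%N)^-1.
  by rewrite -fmorphV -rmorphM; congr (iota _); field; rewrite hkb0 hmu.
split.
  rewrite /is_resolvent /bounded_operator.
  split; [split|split].
  - exact: hRlin.
  - move=> y; apply: continuousZl_tmp; by case: (hSb 0%N) => _ /(_ y).
  - move=> x; split.
      by rewrite /Rl -[_ *: S 0%N x]addr0; apply: hA.2.1; [exact: hSD | exact: hA.1].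
    rewrite /Rl (A_Z _ _ hA (hSD 0%N x)) A0 lamE !scalerA.
    rewrite e1 e2 scalerBr opprB addrC subrK scalerA -rmorphM mulVf // rmorph1.
    by rewrite scale1r.
  - move=> y Dy; rewrite RlE (linB _ _ hS0lin) (linZ _ _ hS0lin) SA0 // A0 lamE -fmorphV.
    rewrite scalerBr -!scalerBr opprB addrC subrK !scalerA -!rmorphM -[RHS]scale1r.
    congr (_ *: _); rewrite -(rmorph1 iota); congr (iota _).
    by field; rewrite hkb0 hmu.
move=> Rt.
have RtE : forall y, Rt y = iota (kb 0%N)^-1 *: S 0%N y.
  move=> y; rewrite /Rt RlE scalerA -rmorphM lamE; congr (iota _ *: _).
  by field; rewrite hkb0 hmu.
have hRtlin : linear Rt.
  by move=> a u v; rewrite !RtE hS0lin scalerDr !scalerA [a * _]mulrC.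
have Rt_inv : forall y, D y -> Rt (y - iota mu *: A y) = y.
  move=> y Dy; rewrite RtE (linB _ _ hS0lin) (linZ _ _ hS0lin) SA0 // eq0.
  by rewrite scalerA -rmorphM mulVf // rmorph1 scale1r.
have Rt_A : forall y, D y -> Rt (A y) = (iota mu)^-1 *: (Rt y - y).
  move=> y Dy; have := Rt_inv y Dy; rewrite (linB _ _ hRtlin) (linZ _ _ hRtlin) => h.
  by rewrite -{3}h opprB addrC subrK scalerA mulVf // scale1r.
have KEY : forall n x, S n x = iota (kb n) *: Rt x + iota (k 0%N)^-1 *:
    \sum_(0 <= j < n) iota (k (n - j)%N) *: (Rt (S j x) - S j x).
  move=> n x; rewrite -{1}(Rt_inv _ (hSD n x)) eqn (linD _ _ hRtlin) (linZ _ _ hRtlin).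
  rewrite (linZ _ _ hRtlin) (lin_sum _ _ _ _ _ hRtlin).
  congr (_ + _); rewrite !scaler_sumr; apply: eq_bigr => j _.
  rewrite Rt_A // !scalerA; congr (_ *: _).
  rewrite -fmorphV -!rmorphM; congr (iota _); rewrite -htk.
  by field; rewrite hk0 ht0.
have acE : forall n l, acoef alpha beta tau n l = aa k kb n l by [].
have scal : forall n l, iota (aa k kb n l) = (l == 1%N)%:R * iota (kb n) +
    iota (k 0%N)^-1 * \sum_(0 <= j < n) iota (k (n - j)%N) *
       (iota (aa k kb j l.-1) - iota (aa k kb j l)).
  move=> n l; rewrite (aa_rec hk0) rmorphD rmorphM rmorph_nat; congr (_ + _).
  rewrite mulrC rmorphM rmorph_sum; congr (_ * _); apply: eq_bigr => j _.
  by rewrite rmorphM rmorphB.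
have main : forall x n M, (n.+2 <= M)%N ->
    S n x = \sum_(0 <= l < M) iota (acoef alpha beta tau n l) *: iter l Rt x.
  move=> x n; elim/ltn_ind: n => n IH M hM.
  have step : forall j, (j < n)%N -> Rt (S j x) - S j x =
      \sum_(0 <= l < M) (iota (aa k kb j l.-1) - iota (aa k kb j l)) *: iter l Rt x.
    move=> j hj; rewrite (IH j hj M); last by lia.
    rewrite (lin_sum _ _ _ _ _ hRtlin).
    under eq_bigr do rewrite -iterS.
    rewrite (shift_sum (fun l => iota (acoef alpha beta tau j l)) (fun l => iter l Rt x)).
    - rewrite -sumrB; apply: eq_bigr => l _; by rewrite scalerBl.
    - by rewrite acE aa0 rmorph0.
    - by rewrite acE aa_big ?rmorph0 //; lia.
    - by lia.
  rewrite KEY.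
  under eq_big_nat => j /andP[_ hj] do rewrite (step j hj).
  under [RHS]eq_bigr do rewrite acE scal scalerDl.
  rewrite big_split /=; congr (_ + _).
    rewrite big_ltn; last by lia.
    rewrite big_ltn; last by lia.
    rewrite big1_seq /=; first by rewrite mul0r scale0r add0r mul1r addr0.
    move=> l; rewrite mem_index_iota => /andP[hl _].
    by case: l hl => [|[|l]] // _; rewrite mul0r scale0r.
  rewrite scaler_sumr; under [LHS]eq_bigr => i _ do rewrite scalerA scaler_sumr.
  rewrite exchange_big /=; apply: eq_bigr => l _.
  rewrite mulr_sumr scaler_suml; apply: eq_bigr => j _.
  by rewrite !scalerA mulrA.
split; [|split].
- move=> x; rewrite (main x 0%N 2) // big_ltn // big_ltn // big_geq //.
  by rewrite acE aa0 rmorph0 scale0r add0r addr0.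
- move=> x; rewrite (main x 1%N 3) // big_ltn // big_ltn // big_ltn // big_geq //.
  by rewrite acE aa0 rmorph0 scale0r add0r addr0.
- move=> n hn x; rewrite (main x n n.+2) // big_ltn //.
  by rewrite acE aa0 rmorph0 scale0r add0r.
Qed.
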